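(* Let $k\ge 2$ and $n>t\geq 1$ be integers. Then the number $B_k(n,t)$ of length-$n$ words over $\Sigma_k$ that have a unique border, this border having length $t$, satisfies \[ B_k(n,t)=\begin{cases} 0, & \text{if } n<2t;\\ u_t k^{n-2t}-\sum_{i=2t}^{\lfloor n/2\rfloor}B_k(i,t)k^{n-2i}, & \text{if } n\ge 2t \text{ and } n+t \text{ is odd};\\ u_t k^{n-2t}-B_k\!\left(\tfrac{n+t}{2},t\right)-\sum_{i=2t}^{\lfloor n/2\rfloor}B_k(i,t)k^{n-2i}, & \text{if } n\ge 2t \text{ and } n+t \text{ is even}. \end{cases} \]
   Context: $\Sigma_k=\{0,1,\ldots,k-1\}$. A border of a word $w$ is a non-empty word that is both a proper prefix and a proper suffix of $w$; $w$ is unbordered if it has no border. A word has a unique border if it has exactly one border. $u_t$ denotes the number of unbordered words of length $t$ over $\Sigma_k$ (with $u_0=1$, $u_n=ku_{n-1}-u_{n/2}$ for even $n>0$, $u_n=ku_{n-1}$ for odd $n$). An empty sum is zero. *)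

(* Defs.v *)
From mathcomp Require Import all_boot all_order all_algebra.
Set Implicit Arguments. Unset Strict Implicit. Unset Printing Implicit Defensive.

(* Words over Sigma_k = {0,...,k-1} are sequences over 'I_k. *)

Definition is_border_len (T : eqType) (w : seq T) (l : nat) : bool :=
  (0 < l) && (l < size w) && (take l w == drop (size w - l) w).

Definition unbordered (T : eqType) (w : seq T) : bool :=
  [forall l : 'I_(size w), ~~ is_border_len w l].

Definition unique_border_len (T : eqType) (w : seq T) (t : nat) : bool :=
  is_border_len w t &&
  [forall l : 'I_(size w), is_border_len w l ==> (val l == t)].

Definition u (k t : nat) : nat :=
  #|[set w : t.-tuple 'I_k | unbordered (tval w)]|.

Definition B (k n t : nat) : nat :=
  #|[set w : n.-tuple 'I_k | unique_border_len (tval w) t]|.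

(* Main.v *)
Require Import Defs.
From mathcomp Require Import all_boot all_order all_algebra zify.

Section Gen.
Context {T : eqType}.
Implicit Types w v : seq T.

Lemma borderP (x0 : T) {w l} : l <= size w ->
  reflect (forall i, i < l -> nth x0 w i = nth x0 w (i + (size w - l)))
          (take l w == drop (size w - l) w).
Proof.
move=> Hl; apply: (iffP eqP) => [E i Hi | H].
  have := congr1 (fun s => nth x0 s i) E; rewrite /= nth_take // nth_drop addnC.
  by [].
apply: (eq_from_nth (x0:=x0)); first by rewrite size_takel // size_drop; lia.
move=> i; rewrite size_takel // => Hi.
by rewrite nth_take // nth_drop H // addnC.
Qed.

Lemma bdE w l : is_border_len w l = [&& 0 < l, l < size w & take l w == drop (size w - l) w].
Proof. by rewrite /is_border_len andbA. Qed.

Lemma bd_take {w l m} : is_border_len w l -> 0 < m < l ->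
  is_border_len (take l w) m = is_border_len w m.
Proof.
rewrite !bdE => /and3P[l0 ln Ew] /andP[m0 ml].
have x0 : T by destruct w as [|x w']; [rewrite ltn0 in ln | exact x].
have Hs : size (take l w) = l by rewrite size_takel // ltnW.
have HW := elimT (borderP x0 (ltnW ln)) Ew.
rewrite {1}Hs m0 ml (ltn_trans ml ln) /=.
have Hm1 : m <= size (take l w) by rewrite Hs ltnW.
have Hm2 : m <= size w by lia.
apply/idP/idP.
  move/(borderP x0 Hm1) => Ht; rewrite Hs in Ht.
  apply/(borderP x0 Hm2).
  move=> i Hi; rewrite -(nth_take x0 (n0:=l)); last by lia.
  rewrite Ht // nth_take; last by lia.
  rewrite HW; last by lia.
  congr nth; lia.
move/(borderP x0 Hm2) => Ht.
apply/(borderP x0 Hm1); rewrite Hs.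
move=> i Hi; rewrite nth_take; last by lia.
rewrite nth_take; last by lia.
rewrite Ht; last by lia.
rewrite [RHS]HW; last by lia.
congr nth; lia.
Qed.

Lemma bd_long {w l} : is_border_len w l -> size w < 2 * l ->
  is_border_len w (2 * l - size w).
Proof.
rewrite !bdE => /and3P[l0 ln Ew] Hn.
have x0 : T by destruct w as [|x w']; [rewrite ltn0 in ln | exact x].
have HW := elimT (borderP x0 (ltnW ln)) Ew.
apply/and3P; split; [lia|lia|].
have Hm2 : 2 * l - size w <= size w by lia.
apply/(borderP x0 Hm2).
move=> i Hi; rewrite HW; last by lia.
rewrite HW; last by lia.
congr nth; lia.
Qed.

Lemma unbP v : reflect (forall m, ~~ is_border_len v m) (unbordered v).
Proof.
apply: (iffP forallP) => [H m | H l]; last exact: H.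
case: (ltnP m (size v)) => Hm; first exact: (H (Ordinal Hm)).
by rewrite bdE (ltnNge m) Hm andbF.
Qed.

Lemma ublP v t : reflect (is_border_len v t /\ forall m, is_border_len v m -> m = t)
  (unique_border_len v t).
Proof.
apply: (iffP andP) => [[H1 /forallP H2] | [H1 H2]]; split => //.
  move=> m Hm; have Hs : m < size v by move: Hm; rewrite bdE => /and3P[].
  by move: (H2 (Ordinal Hs)); rewrite /= Hm => /eqP.
by apply/forallP => l; apply/implyP => /H2 /eqP.
Qed.

Lemma bd_lt {w l} : is_border_len w l -> 0 < l < size w.
Proof. by rewrite bdE => /and3P[-> ->]. Qed.

Lemma ubl_unb {v t} : unique_border_len v t -> is_border_len v t && unbordered (take t v).
Proof.
move/ublP => [H1 H2]; rewrite H1 /=; apply/unbP => m; apply/negP => Hm.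
have := bd_lt Hm; rewrite size_takel; last by have := bd_lt H1; lia.
move=> Hmt; rewrite bd_take // in Hm; have := H2 _ Hm; lia.
Qed.

Lemma low_border {w t m} : is_border_len w t -> unbordered (take t w) ->
  is_border_len w m -> t <= m.
Proof.
move=> Ht /unbP Hu Hm; rewrite leqNgt; apply/negP => Hmt.
have := Hu m; rewrite bd_take ?Hm //; have := bd_lt Hm; lia.
Qed.

Lemma ubl_size {v t} : unique_border_len v t -> 2 * t <= size v.
Proof.
move/ublP => [H1 H2]; rewrite leqNgt; apply/negP => Hs.
have H3 := bd_long H1 Hs; have := H2 _ H3; have := bd_lt H1; lia.
Qed.

End Gen.

Lemma sum_ind1 (s : seq nat) l0 : uniq s -> l0 \in s ->
  \sum_(i <- s) (i == l0 : nat) = 1.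
Proof.
move=> Us Ls; rewrite (bigD1_seq l0) //= eqxx big1 // => i /negPf -> //.
Qed.

Lemma word_id (T : eqType) (w : seq T) t : 0 < t ->
  (is_border_len w t && unbordered (take t w) : nat) =
  unique_border_len w t + \sum_(t.+1 <= l < size w)
      (is_border_len w l && unique_border_len (take l w) t : nat).
Proof.
move=> t0.
case E: (is_border_len w t && unbordered (take t w)).
  have /andP[Ht Hu] := E.
  case U: (unique_border_len w t).
    rewrite big1_seq ?addn0 // => l /andP[_]; rewrite mem_index_iota => /andP[Hl _].
    case/ublP: U => _ H2; case Hb: (is_border_len w l) => //.
    by have := H2 _ Hb; lia.
  have : ~~ [forall l : 'I_(size w), is_border_len w l ==> (val l == t)].
    by move: U; rewrite /unique_border_len Ht /= => ->.
  rewrite negb_forall => /existsP [l0 Hl0].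
  rewrite negb_imply in Hl0; case/andP: Hl0 => Hb Hne.
  have Hne2 : (l0 : nat) <> t by apply/eqP.
  have Hlt : t < l0 by have := low_border Ht Hu Hb; lia.
  have ex : exists l, (t < l) && is_border_len w l by exists l0; rewrite Hlt.
  case: (ex_minnP ex) => l /andP[tl bl] lmin.
  have blt := bd_lt bl.
  rewrite add0n [nat_of_bool true]/= -(@sum_ind1 (index_iota t.+1 (size w)) l); last first.
  - by rewrite mem_index_iota; lia.
  - exact: iota_uniq.
  apply: eq_big_seq => i; rewrite mem_index_iota => /andP[ti iw].
  congr nat_of_bool.
  apply/idP/idP.
    move=> /eqP ->; rewrite bl /=; apply/ublP; split.
      by rewrite (bd_take bl) //; lia.
    move=> m bm; have := bd_lt bm; rewrite size_takel; last by lia.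
    move=> Hm; rewrite (bd_take bl) in bm; last by lia.
    have := low_border Ht Hu bm; rewrite leq_eqVlt => /orP [/eqP -> //|tm].
    by have := lmin m; rewrite tm bm => /(_ isT); lia.
  case/andP=> bi /ublP [_ H2]; apply/eqP; apply/eqP/negP => ne.
  have li : l <= i by apply: lmin; rewrite ti bi.
  have li' : l < i by move: ne; lia.
  have := H2 l; rewrite bd_take // ?bl; last by lia.
  by move=> /(_ isT); lia.
have U : unique_border_len w t = false.
  by apply/negP => /ubl_unb; rewrite E.
rewrite U big1_seq // => l /andP[_]; rewrite mem_index_iota => /andP[tl _].
apply/eqP; rewrite eqb0; apply/negP => /andP[bl /ubl_unb /andP[bt ut]].
have blt := bd_lt bl.
move: E; rewrite -(bd_take bl) ?bt /=; last by lia.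
by rewrite take_takel in ut; [rewrite ut | lia].
Qed.

Section Count.
Variable k : nat.
Notation W n := (n.-tuple 'I_k).

Lemma card_sumP n (P : pred (seq 'I_k)) :
  #|[set w : W n | P (tval w)]| = \sum_(w : W n) P (tval w).
Proof.
rewrite -sum1_card big_mkcond /=; apply: eq_bigr => w _; rewrite inE.
by case: (P _).
Qed.

Lemma sum_cons n (F : seq 'I_k -> nat) :
  \sum_(w : W n.+1) F (tval w) = \sum_(x : 'I_k) \sum_(w : W n) F (x :: tval w).
Proof.
rewrite pair_big /=.
rewrite (reindex (fun p : 'I_k * W n => cons_tuple p.1 p.2)) /=; first by [].
exists (fun w : W n.+1 => (thead w, behead_tuple w)) => [[x w] _ | w _] /=.
  by congr pair; apply: val_inj.
by apply: val_inj; case: w => [[|x s] Hs].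
Qed.

Lemma sum_split a b (F : seq 'I_k -> nat) :
  \sum_(w : W (a + b)) F (tval w) =
  \sum_(v : W a) \sum_(y : W b) F (tval v ++ tval y).
Proof.
elim: a F => [|a IH] F.
  rewrite [RHS](bigD1 [tuple]) //= [X in _ = _ + X]big1 ?addn0 // => v.
  by rewrite tuple0 => /negP.
rewrite addSn sum_cons (sum_cons a (fun s => \sum_(y : W b) F (s ++ tval y))).
by apply: eq_bigr => x _; rewrite (IH (fun s => F (x :: s))).
Qed.

Lemma sum_castn m n (F : seq 'I_k -> nat) : m = n ->
  \sum_(w : W m) F (tval w) = \sum_(w : W n) F (tval w).
Proof. by move->. Qed.

Lemma sum_eqs m (s : seq 'I_k) :
  \sum_(z : W m) (tval z == s : nat) = (size s == m).
Proof.
case: (eqVneq (size s) m) => Hs.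
  have Hs' : size s == m by rewrite Hs.
  rewrite (bigD1 (Tuple Hs')) //= eqxx big1 // => z Hz.
  case: eqP => // E; move: Hz; suff -> : z = Tuple Hs' by rewrite eqxx.
  exact: val_inj.
rewrite big1 // => z _; case: eqP => // E; move: Hs.
by rewrite -E size_tuple eqxx.
Qed.

Lemma sum_const_tuple m c : \sum_(z : W m) c = k ^ m * c.
Proof. by rewrite sum_nat_const card_tuple card_ord. Qed.

End Count.

Section Main.
Variable k : nat.
Notation W n := (n.-tuple 'I_k).

Lemma L1 n l (Q : pred (seq 'I_k)) : 2 * l <= n ->
  \sum_(w : W n) ((take l w == drop (n - l) w) && Q (take l w) : nat)
  = (\sum_(v : W l) Q v) * k ^ (n - 2 * l).
Proof.
move=> H.
pose F := fun s : seq 'I_k => ((take l s == drop (n - l) s) && Q (take l s) : nat).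
change (\sum_(w : W n) F w = (\sum_(v : W l) Q v) * k ^ (n - 2 * l)).
rewrite -(@sum_castn k (l + ((n - 2 * l) + l)) n F); last by lia.
rewrite sum_split big_distrl /=; apply: eq_bigr => v _.
rewrite (@sum_split k _ _ (fun s => F (tval v ++ s))).
rewrite (eq_bigr (fun _ => (Q v : nat))) => [|y _]; first by rewrite sum_const_tuple mulnC.
have Hv := size_tuple v.
case Qv: (Q v); last first.
  rewrite big1 // => z _; rewrite /F take_size_cat // Qv andbF //.
rewrite (eq_bigr (fun z : W l => (tval z == tval v : nat))) ?sum_eqs ?size_tuple ?eqxx //.
move=> z _; rewrite /F take_size_cat // Qv andbT catA drop_size_cat; first by rewrite eq_sym.
rewrite size_cat !size_tuple; lia.
Qed.

Lemma L2 n l t : 0 < t -> t < l -> l < n -> n < 2 * l ->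
  \sum_(w : W n) (is_border_len (tval w) l && unique_border_len (take l w) t : nat)
  = (2 * l == n + t) * B k l t.
Proof.
move=> t0 tl ln nl.
case: eqP => H2; last first.
  rewrite mul0n big1 // => w _; apply/eqP; rewrite eqb0.
  apply/negP => /andP[bl /ublP [bt Hu]].
  have sw := size_tuple w.
  have b2 := bd_long bl; rewrite sw in b2; have b3 := b2 nl.
  rewrite -(bd_take bl) in b3; last by lia.
  by have := Hu _ b3; lia.
rewrite mul1n /B (card_sumP _ _ (fun s => unique_border_len s t)).
pose F := fun s : seq 'I_k => (is_border_len s l && unique_border_len (take l s) t : nat).
change (\sum_(w : W n) F w = \sum_(w : W l) unique_border_len w t).
rewrite -(@sum_castn k ((n - l) + l) n F); last by lia.
rewrite sum_split exchange_big /=; apply: eq_bigr => y _.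
have sy := size_tuple y.
have Hv : forall v : W (n - l), F (tval v ++ tval y) =
   ((tval v == take (n - l) y) && unique_border_len y t : nat).
  move=> v; have sv := size_tuple v.
  have E1 : take l (tval v ++ tval y) = tval v ++ take t y.
    rewrite take_cat sv ifN; last by rewrite -leqNgt; lia.
    by have -> : l - (n - l) = t by lia.
  rewrite /F bdE size_cat sv sy E1.
  have -> : n - l + l - l = n - l by lia.
  rewrite drop_size_cat //.
  have -> : (0 < l) = true by lia.
  have -> : (l < n - l + l) = true by lia.
  rewrite /=.
  case: eqP => [E|NE].
    rewrite E.
    have -> : tval v = take (n - l) y.
      by have := congr1 (take (n - l)) E; rewrite take_size_cat.
    by rewrite eqxx.
  case: eqP => // Ev.
  case Hy: (unique_border_len y t); last by rewrite andbF.
  exfalso; apply: NE; rewrite Ev.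
  have/ublP [bt _] := Hy; move: bt; rewrite bdE sy => /and3P[_ _ /eqP Et].
  rewrite (_ : l - t = n - l) in Et; last by lia.
  by rewrite Et cat_take_drop.
rewrite (eq_bigr _ (fun v _ => Hv v)).
case Hy: (unique_border_len y t); last by rewrite big1 // => v _; rewrite andbF.
under eq_bigr do rewrite andbT.
by rewrite sum_eqs size_takel ?eqxx //; lia.
Qed.

Lemma sum_pick (s : seq nat) l0 (G : nat -> nat) : uniq s -> l0 \in s ->
  \sum_(i <- s) (i == l0) * G i = G l0.
Proof.
move=> Us Ls; rewrite (bigD1_seq l0) //= eqxx mul1n big1 ?addn0 // => i /negPf ->.
by rewrite mul0n.
Qed.

Lemma main_nat n t : 0 < t -> 2 * t <= n ->
  u k t * k ^ (n - 2 * t) = B k n t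
   + \sum_(2 * t <= i < (n %/ 2).+1) B k i t * k ^ (n - 2 * i)
   + (~~ odd (n + t)) * B k ((n + t) %/ 2) t.
Proof.
move=> t0 tn.
have H : \sum_(w : W n) (is_border_len (tval w) t && unbordered (take t w) : nat) =
  \sum_(w : W n) (unique_border_len (tval w) t : nat) +
  \sum_(w : W n) \sum_(t.+1 <= l < n)
     (is_border_len (tval w) l && unique_border_len (take l w) t : nat).
  rewrite -big_split; apply: eq_bigr => w _.
  by rewrite word_id // size_tuple.
rewrite (eq_bigr (fun w : W n => ((take t w == drop (n - t) w) && unbordered (take t w) : nat))) in H; last first.
  move=> w _; rewrite bdE size_tuple.
  have -> : (0 < t) = true by lia.
  by have -> : (t < n) = true by lia.
rewrite L1 // in H.
rewrite /u /B (card_sumP _ _ (fun s => unique_border_len s t)) (card_sumP _ _ (fun s => unbordered s)) H exchange_big /=.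
rewrite -addnA; congr addn.
rewrite (big_cat_nat _ (n := (n %/ 2).+1)); [|lia|lia].
congr addn.
  rewrite (eq_big_nat _ _ (F2 := fun l => B k l t * k ^ (n - 2 * l))); last first.
    move=> l /andP[l1 l2].
    rewrite (eq_bigr (fun w : W n => ((take l w == drop (n - l) w) && unique_border_len (take l w) t : nat))).
      by rewrite (@L1 n l (fun s => unique_border_len s t)) /B ?(card_sumP _ _ (fun s => unique_border_len s t)) //; lia.
    move=> w _; rewrite bdE size_tuple.
    have -> : (0 < l) = true by lia.
    by have -> : (l < n) = true by lia.
  have Bz : forall l, l < 2 * t -> B k l t = 0.
    move=> l Hl; rewrite /B (card_sumP _ _ (fun s => unique_border_len s t)) big1 // => w _.
    apply/eqP; rewrite eqb0; apply/negP => /ubl_size; rewrite size_tuple; lia.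
  case: (leqP (2 * t) (n %/ 2).+1) => Hc.
    rewrite (big_cat_nat _ (n := 2 * t)); [|lia|lia].
    have Z : \sum_(t.+1 <= l < 2 * t) B k l t * k ^ (n - 2 * l) = 0.
      rewrite big_nat_cond big1 // => l /andP[/andP[tl l2] _].
      by rewrite Bz.
    by rewrite /= Z add0n.
  rewrite [RHS]big_geq; last by lia.
  rewrite big_nat_cond big1 // => l /andP[/andP[tl l2] _].
  by rewrite Bz //; lia.
rewrite (eq_big_nat _ _ (F2 := fun l => (2 * l == n + t) * B k l t)); last first.
  by move=> l /andP[l1 l2]; rewrite L2 //; lia.
case: (boolP (odd (n + t))) => Ho.
  rewrite mul0n big_nat_cond big1 // => l /andP[/andP[l1 l2] _].
  have -> : (2 * l == n + t) = false by apply/negP => /eqP; lia.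
  by rewrite mul0n.
rewrite mul1n /B.
rewrite (eq_big_nat _ _ (F2 := fun l => (l == (n + t) %/ 2) * B k l t)); last first.
  move=> l /andP[l1 l2].
  case: (boolP (l == (n + t) %/ 2)) => /eqP E.
    by have -> : (2 * l == n + t) = true by apply/eqP; lia.
  by have -> : (2 * l == n + t) = false by apply/negP => /eqP; lia.
rewrite sum_pick ?iota_uniq // mem_index_iota; lia.
Qed.

End Main.

Import GRing.Theory.
Local Open Scope ring_scope.

Theorem theorem9 (k n t : nat) :
  (2 <= k)%N -> (1 <= t)%N -> (t < n)%N ->
  (B k n t)%:Z =
  if (n < 2 * t)%N then 0
  else if odd (n + t) then
    (u k t)%:Z * (k ^ (n - 2 * t))%:Z
    - \sum_(2 * t <= i < (n %/ 2).+1) (B k i t)%:Z * (k ^ (n - 2 * i))%:Z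
  else
    (u k t)%:Z * (k ^ (n - 2 * t))%:Z - (B k ((n + t) %/ 2) t)%:Z
    - \sum_(2 * t <= i < (n %/ 2).+1) (B k i t)%:Z * (k ^ (n - 2 * i))%:Z.
Proof.
move=> k2 t1 tn.
case: ifP => Hn.
  have -> : B k n t = 0%N; last by [].
  rewrite /B (card_sumP _ _ (fun s => unique_border_len s t)) big1 // => w _.
  apply/eqP; rewrite eqb0; apply/negP => /ubl_size; rewrite size_tuple; lia.
have Hn2 : (2 * t <= n)%N by rewrite leqNgt Hn.
have M := @main_nat k n t t1 Hn2.
have Sz : \sum_(2 * t <= i < (n %/ 2).+1) (B k i t)%:Z * (k ^ (n - 2 * i))%:Z
   = (\sum_(2 * t <= i < (n %/ 2).+1) B k i t * k ^ (n - 2 * i))%N%:Z.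
  rewrite (big_morph _ PoszD (erefl _)); apply: eq_bigr => i _.
  by rewrite PoszM.
rewrite Sz -PoszM.
move: M; set S := (\sum_(_ <= _ < _) _)%N; set X := (u k t * _)%N => M.
case: ifP => Ho; rewrite Ho /= in M; lia.
Qed.
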